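(* Let $\alpha$ be an action of $A\cong\mathbb R^k\times\mathbb Z^l$ on a compact manifold $M$ with coarse Lyapunov foliations $\mathcal W=\{W^r\}$, let $x_0\in M$, and let $\beta:A\times M\to H$ be any H\''older cocycle over $\alpha$ with values in a Lie group $H$ with bi-invariant metric. Then $\mathcal S_{x_0}(\mathcal W)\subset\ker P_\beta$.
   Context: For an action $\alpha$ of $A$ with Lyapunov exponents $\Delta\subset\operatorname{Hom}(A,\mathbb R)$, the coarse Lyapunov foliation of $r$ is $W^r=\bigcap_{a:\,r(a)<0}W^s_a$, where $W^s_a$ is the stable foliation of $\alpha^a$ (here assumed to exist). A Lyapunov path based at $x_0$ is a finite sequence $(x_0,\dots,x_N)$ with $x_{i+1}\in W^{r_i}(x_i)$ for some $r_i$; it is a cycle if $x_N=x_0$. Cycles form a group $\mathcal C_{x_0}(\mathcal W)$ under concatenation (a cycle cancels with its reverse). A cycle is stable if there is $a\in A$ with $r_i(a)<0$ for all $i$; $\mathcal S_{x_0}(\mathcal W)$ is the normal subgroup of $\mathcal C_{x_0}(\mathcal W)$ generated by stable cycles. For a H\''older cocycle $\beta$ (i.e. $\beta(ab,x)=\beta(a,\alpha^b x)\beta(b,x)$), and $y\in W^r(x)$, set $p_\beta(x,y)=\lim_{n\to\infty}\beta(na,x)^{-1}\beta(na,y)$ for any $a$ with $r(a)<0$ (independent of such $a$). The periodic cycle functional is $P_\beta(x_0,\dots,x_N=x_0)=\prod_{i=0}^{N-1}p_\beta(x_i,x_{i+1})$. *)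

(* Defs.v *)
From Stdlib Require Import Reals ZArith List.
From Stdlib Require Fin.
Open Scope R_scope.

Definition Avec (k l : nat) : Type := ((Fin.t k -> R) * (Fin.t l -> Z))%type.

Definition addA {k l} (a b : Avec k l) : Avec k l :=
  (fun i => fst a i + fst b i, fun j => (snd a j + snd b j)%Z).
Definition zeroA {k l} : Avec k l := (fun _ => 0, fun _ => 0%Z).
Definition nsmulA {k l} (n : nat) (a : Avec k l) : Avec k l :=
  (fun i => INR n * fst a i, fun j => (Z.of_nat n * snd a j)%Z).

Fixpoint fsum (n : nat) : (Fin.t n -> R) -> R :=
  match n return (Fin.t n -> R) -> R with
  | O => fun _ => 0
  | S m => fun f => f Fin.F1 + fsum m (fun i => f (Fin.FS i))
  end.

(* Continuous homomorphisms A -> R, i.e. elements of Hom(A,R),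
   given by their coefficients. *)
Definition HomAR (k l : nat) : Type := ((Fin.t k -> R) * (Fin.t l -> R))%type.
Definition evalH {k l} (r : HomAR k l) (a : Avec k l) : R :=
  fsum k (fun i => fst r i * fst a i) + fsum l (fun j => snd r j * IZR (snd a j)).

Definition is_metric {X : Type} (d : X -> X -> R) : Prop :=
  (forall x y, 0 <= d x y) /\ (forall x y, d x y = 0 <-> x = y) /\
  (forall x y, d x y = d y x) /\ (forall x y z, d x z <= d x y + d y z).

Definition converges {X : Type} (d : X -> X -> R) (u : nat -> X) (L : X) : Prop :=
  forall eps, 0 < eps -> exists N, forall n, (N <= n)%nat -> d (u n) L < eps.

Definition seq_compact {X : Type} (d : X -> X -> R) : Prop :=
  forall u : nat -> X, exists (phi : nat -> nat) (L : X),
    (forall n, (phi n < phi (S n))%nat) /\ converges d (fun n => u (phi n)) L.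

Definition continuous_map {X Y : Type} (dX : X -> X -> R) (dY : Y -> Y -> R)
  (f : X -> Y) : Prop :=
  forall x eps, 0 < eps -> exists delta, 0 < delta /\
    forall y, dX x y < delta -> dY (f x) (f y) < eps.

Definition complete {X : Type} (d : X -> X -> R) : Prop :=
  forall u : nat -> X,
    (forall eps, 0 < eps -> exists N, forall n m, (N <= n)%nat -> (N <= m)%nat ->
        d (u n) (u m) < eps) ->
    exists L, converges d u L.

Definition is_group {H : Type} (mul : H -> H -> H) (inv : H -> H) (e : H) : Prop :=
  (forall x y z, mul x (mul y z) = mul (mul x y) z) /\
  (forall x, mul e x = x) /\ (forall x, mul x e = x) /\
  (forall x, mul (inv x) x = e) /\ (forall x, mul x (inv x) = e).

Definition bi_invariant {H : Type} (mul : H -> H -> H) (dH : H -> H -> R) : Prop :=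
  forall g x y, dH (mul g x) (mul g y) = dH x y /\ dH (mul x g) (mul y g) = dH x y.

Definition is_action {k l} {M : Type} (dM : M -> M -> R)
  (alpha : Avec k l -> M -> M) : Prop :=
  (forall x, alpha zeroA x = x) /\
  (forall a b x, alpha (addA a b) x = alpha a (alpha b x)) /\
  (forall a, continuous_map dM dM (alpha a)).

Definition is_cocycle {k l} {M H : Type} (mul : H -> H -> H)
  (alpha : Avec k l -> M -> M) (beta : Avec k l -> M -> H) : Prop :=
  forall a b x, beta (addA a b) x = mul (beta a (alpha b x)) (beta b x).

Definition holder_in_x {k l} {M H : Type} (dM : M -> M -> R) (dH : H -> H -> R)
  (beta : Avec k l -> M -> H) : Prop :=
  exists theta, 0 < theta /\ theta <= 1 /\
    forall a, exists C, 0 <= C /\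
      forall x y, dH (beta a x) (beta a y) <= C * Rpower (dM x y) theta.

Definition is_equivalence {M : Type} (Rl : M -> M -> Prop) : Prop :=
  (forall x, Rl x x) /\ (forall x y, Rl x y -> Rl y x) /\
  (forall x y z, Rl x y -> Rl y z -> Rl x z).

(* Ws a = the (leaf relation of the) stable foliation of alpha^a *)
Definition stable_foliations {k l} {M : Type} (dM : M -> M -> R)
  (alpha : Avec k l -> M -> M) (Ws : Avec k l -> M -> M -> Prop) : Prop :=
  forall a, is_equivalence (Ws a) /\
    forall x y, Ws a x y ->
      converges (fun u v => Rabs (u - v)) (fun n => dM (alpha (nsmulA n a) x) (alpha (nsmulA n a) y)) 0.

Definition coarseW {k l} {M : Type} (Ws : Avec k l -> M -> M -> Prop)
  (r : HomAR k l) (x y : M) : Prop :=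
  forall a, evalH r a < 0 -> Ws a x y.

(* A path based at x0 is encoded as the list [(r_0,x_1); ...; (r_{N-1},x_N)]. *)
Definition LPath (k l : nat) (M : Type) : Type := list (HomAR k l * M).

Fixpoint lyap_path {k l} {M : Type} (Delta : list (HomAR k l))
  (Ws : Avec k l -> M -> M -> Prop) (x : M) (c : LPath k l M) : Prop :=
  match c with
  | nil => True
  | (r, y) :: c' => In r Delta /\ coarseW Ws r x y /\ lyap_path Delta Ws y c'
  end.

Fixpoint endpt {k l} {M : Type} (x : M) (c : LPath k l M) : M :=
  match c with
  | nil => x
  | (_, y) :: c' => endpt y c'
  end.

Definition lyap_cycle {k l} {M : Type} (Delta : list (HomAR k l))
  (Ws : Avec k l -> M -> M -> Prop) (x0 : M) (c : LPath k l M) : Prop :=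
  lyap_path Delta Ws x0 c /\ endpt x0 c = x0.

Fixpoint revp {k l} {M : Type} (x : M) (c : LPath k l M) : LPath k l M :=
  match c with
  | nil => nil
  | (r, y) :: c' => revp y c' ++ ((r, x) :: nil)
  end.

Definition stable_cycle {k l} {M : Type} (Delta : list (HomAR k l))
  (Ws : Avec k l -> M -> M -> Prop) (x0 : M) (c : LPath k l M) : Prop :=
  lyap_cycle Delta Ws x0 c /\
  exists a : Avec k l, forall r y, In (r, y) c -> evalH r a < 0.

(* elementary relation of the group C_{x0}: a cycle cancels with its reverse *)
Definition cancel_step {k l} {M : Type} (Delta : list (HomAR k l))
  (Ws : Avec k l -> M -> M -> Prop) (x0 : M) (c c' : LPath k l M) : Prop :=
  exists u d v, lyap_cycle Delta Ws x0 u /\ lyap_cycle Delta Ws x0 d /\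
    lyap_cycle Delta Ws x0 v /\
    c = u ++ d ++ revp x0 d ++ v /\ c' = u ++ v.

(* InS c : c represents an element of S_{x0}(W), the normal subgroup of
   C_{x0}(W) generated by the stable cycles *)
Inductive InS {k l} {M : Type} (Delta : list (HomAR k l))
  (Ws : Avec k l -> M -> M -> Prop) (x0 : M) : LPath k l M -> Prop :=
| InS_stable c : stable_cycle Delta Ws x0 c -> InS Delta Ws x0 c
| InS_mul c d : InS Delta Ws x0 c -> InS Delta Ws x0 d -> InS Delta Ws x0 (c ++ d)
| InS_inv c : InS Delta Ws x0 c -> InS Delta Ws x0 (revp x0 c)
| InS_conj g c : lyap_cycle Delta Ws x0 g -> InS Delta Ws x0 c ->
    InS Delta Ws x0 (g ++ c ++ revp x0 g)
| InS_cancel c c' : InS Delta Ws x0 c -> cancel_step Delta Ws x0 c c' ->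
    InS Delta Ws x0 c'
| InS_uncancel c c' : InS Delta Ws x0 c -> cancel_step Delta Ws x0 c' c ->
    InS Delta Ws x0 c'.

Definition is_p_beta {k l} {M H : Type} (mul : H -> H -> H) (inv : H -> H)
  (dH : H -> H -> R) (Delta : list (HomAR k l)) (Ws : Avec k l -> M -> M -> Prop)
  (beta : Avec k l -> M -> H) (p : M -> M -> H) : Prop :=
  forall r x y, In r Delta -> coarseW Ws r x y ->
    forall a, evalH r a < 0 ->
      converges dH (fun n => mul (inv (beta (nsmulA n a) x)) (beta (nsmulA n a) y)) (p x y).

Fixpoint Pfun {k l} {M H : Type} (mul : H -> H -> H) (e : H) (p : M -> M -> H)
  (x : M) (c : LPath k l M) : H :=
  match c with
  | nil => e
  | (_, y) :: c' => mul (p x y) (Pfun mul e p y c')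
  end.

(* Main.v *)
Require Import Defs.
From Stdlib Require Import Reals ZArith List Lra Lia.
Open Scope R_scope.

Lemma fsum_opp n : forall f g : Fin.t n -> R, (forall i, f i = - g i) -> fsum n f = - fsum n g.
Proof.
  induction n as [|n IH]; intros f g Hfg; simpl.
  - ring.
  - rewrite (IH (fun i => f (Fin.FS i)) (fun i => g (Fin.FS i))) by (intros; apply Hfg).
    rewrite Hfg. ring.
Qed.

Definition negA {k l} (a : Avec k l) : Avec k l :=
  (fun i => - fst a i, fun j => (- snd a j)%Z).

Lemma evalH_neg {k l} (r : HomAR k l) a : evalH r (negA a) = - evalH r a.
Proof.
  unfold evalH, negA; simpl.
  rewrite (fsum_opp k _ (fun i => fst r i * fst a i)) by (intros; ring).
  rewrite (fsum_opp l _ (fun j => snd r j * IZR (snd a j))) by (intros; rewrite opp_IZR; ring).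
  ring.
Qed.

Lemma conv_ext {X} (d : X -> X -> R) u v L :
  (forall n, u n = v n) -> converges d u L -> converges d v L.
Proof. intros Huv Hc eps He. destruct (Hc eps He) as [N HN]. exists N. intros n Hn. rewrite <- Huv. auto. Qed.

Lemma conv_const {X} (d : X -> X -> R) c : is_metric d -> converges d (fun _ => c) c.
Proof. intros [Hp [Hz _]] eps He. exists 0%nat. intros. rewrite (proj2 (Hz c c) eq_refl). auto. Qed.

Lemma conv_unique {X} (d : X -> X -> R) u L K : is_metric d ->
  converges d u L -> converges d u K -> L = K.
Proof.
  intros [Hp [Hz [Hs Ht]]] HL HK.
  destruct (Rle_lt_dec (d L K) 0) as [H0|H0].
  - apply Hz. specialize (Hp L K). lra.
  - destruct (HL (d L K / 2)) as [N1 HN1]; [lra|].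
    destruct (HK (d L K / 2)) as [N2 HN2]; [lra|].
    specialize (HN1 (max N1 N2) (Nat.le_max_l _ _)). specialize (HN2 (max N1 N2) (Nat.le_max_r _ _)).
    pose proof (Ht L (u (max N1 N2)) K). rewrite (Hs L (u (max N1 N2))) in H. lra.
Qed.

Lemma mul_conv {H} (mul : H -> H -> H) dH u v L K : is_metric dH -> bi_invariant mul dH ->
  converges dH u L -> converges dH v K -> converges dH (fun n => mul (u n) (v n)) (mul L K).
Proof.
  intros [Hp [Hz [Hs Ht]]] Hbi Hu Hv eps He.
  destruct (Hu (eps/2)) as [N1 HN1]; [lra|].
  destruct (Hv (eps/2)) as [N2 HN2]; [lra|].
  exists (max N1 N2). intros n Hn.
  eapply Rle_lt_trans. apply Ht with (y := mul L (v n)).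
  rewrite (proj2 (Hbi (v n) (u n) L)). rewrite (proj1 (Hbi L (v n) K)).
  specialize (HN1 n (Nat.max_lub_l _ _ _ Hn)); specialize (HN2 n (Nat.max_lub_r _ _ _ Hn)); lra.
Qed.

Section G.
Context {H : Type} (mul : H -> H -> H) (inv : H -> H) (e : H).
Lemma inv_unique : is_group mul inv e -> forall x y, mul x y = e -> inv x = y.
Proof.
  intros [Ha [Hl [Hr [Hli Hri]]]] x y Hxy.
  rewrite <- (Hr (inv x)), <- Hxy, Ha, Hli, Hl. reflexivity.
Qed.
Lemma inv_mul : is_group mul inv e -> forall a b, inv (mul a b) = mul (inv b) (inv a).
Proof.
  intros G a b. apply (inv_unique G). pose proof G as [Ha [Hl [Hr [Hli Hri]]]].
  rewrite <- Ha, (Ha b), Hri, Hl, Hri. reflexivity.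
Qed.
Lemma inv_inv : is_group mul inv e -> forall a, inv (inv a) = a.
Proof. intros G a. apply (inv_unique G). destruct G as [_ [_ [_ [Hli _]]]]. apply Hli. Qed.
Lemma inv_e : is_group mul inv e -> inv e = e.
Proof. intros G. apply (inv_unique G). destruct G as [_ [Hl _]]. apply Hl. Qed.
Lemma inv_iso dH : is_group mul inv e -> is_metric dH -> bi_invariant mul dH ->
  forall x y, dH (inv x) (inv y) = dH x y.
Proof.
  intros [Ha [Hl [Hr [Hli Hri]]]] [_ [_ [Hs _]]] Hbi x y.
  rewrite <- (proj1 (Hbi x (inv x) (inv y))). rewrite Hri.
  rewrite <- (proj2 (Hbi y e (mul x (inv y)))). rewrite Hl, <- Ha, Hli, Hr. apply Hs.
Qed.
End G.

Fixpoint Pfun_app {k l} {M H : Type} (mul : H -> H -> H) (inv : H -> H) (e : H) (p : M -> M -> H)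
  (G : is_group mul inv e) (a : LPath k l M) {struct a} : forall b x,
  Pfun mul e p x (a ++ b) = mul (Pfun mul e p x a) (Pfun mul e p (endpt x a) b).
Proof.
  destruct a as [|[r y] a']; intros b x; simpl.
  - destruct G as [_ [Hl _]]. rewrite Hl. reflexivity.
  - rewrite (Pfun_app _ _ _ _ _ _ _ _ G a'). destruct G as [Ha _]. apply Ha.
Qed.

Lemma endpt_app {k l} {M : Type} (a b : LPath k l M) x : endpt x (a ++ b) = endpt (endpt x a) b.
Proof. revert x; induction a as [|[r y] a' IH]; intros x; simpl; auto. Qed.

Lemma lyap_path_app {k l} {M : Type} Delta Ws (a b : LPath k l M) x :
  lyap_path Delta Ws x (a ++ b) <-> lyap_path Delta Ws x a /\ lyap_path Delta Ws (endpt x a) b.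
Proof.
  revert x; induction a as [|[r y] a' IH]; intros x; simpl.
  - tauto.
  - rewrite IH. tauto.
Qed.

Lemma endpt_rev {k l} {M : Type} (c : LPath k l M) x : endpt (endpt x c) (revp x c) = x.
Proof.
  revert x; induction c as [|[r y] c' IH]; intros x; simpl; auto.
  rewrite endpt_app, IH. reflexivity.
Qed.

Lemma coarseW_sym {k l} {M : Type} dM alpha (Ws : Avec k l -> M -> M -> Prop) r x y :
  stable_foliations dM alpha Ws -> coarseW Ws r x y -> coarseW Ws r y x.
Proof. intros HWs Hc a Ha. destruct (HWs a) as [[_ [Hsym _]] _]. apply Hsym, Hc, Ha. Qed.

Lemma lyap_path_rev {k l} {M : Type} dM alpha Delta (Ws : Avec k l -> M -> M -> Prop) :
  stable_foliations dM alpha Ws ->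
  forall c x, lyap_path Delta Ws x c -> lyap_path Delta Ws (endpt x c) (revp x c).
Proof.
  intros HWs c; induction c as [|[r y] c' IH]; intros x Hp; simpl in *; auto.
  destruct Hp as [Hin [Hc Hp]]. apply lyap_path_app. split; [apply IH; auto|].
  rewrite endpt_rev. simpl. repeat split; auto. eapply coarseW_sym; eauto.
Qed.

Lemma cycle_app {k l} {M : Type} Delta Ws x0 (a b : LPath k l M) :
  lyap_cycle Delta Ws x0 a -> lyap_cycle Delta Ws x0 b -> lyap_cycle Delta Ws x0 (a ++ b).
Proof.
  intros [Ha Ea] [Hb Eb]. split.
  - apply lyap_path_app. rewrite Ea. auto.
  - rewrite endpt_app, Ea. auto.
Qed.

Lemma cycle_rev {k l} {M : Type} dM alpha Delta Ws x0 (a : LPath k l M) :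
  stable_foliations dM alpha Ws ->
  lyap_cycle Delta Ws x0 a -> lyap_cycle Delta Ws x0 (revp x0 a).
Proof.
  intros HWs [Ha Ea]. split.
  - rewrite <- Ea at 1. eapply lyap_path_rev; eauto.
  - rewrite <- Ea at 1. rewrite endpt_rev. auto.
Qed.

Theorem mainTheorem3
  (k l : nat)
  (M : Type) (dM : M -> M -> R)
  (HdM : is_metric dM) (Mcpt : seq_compact dM)
  (alpha : Avec k l -> M -> M) (Halpha : is_action dM alpha)
  (Delta : list (HomAR k l))
  (HDelta : forall r, In r Delta -> exists a, evalH r a <> 0)
  (Ws : Avec k l -> M -> M -> Prop) (HWs : stable_foliations dM alpha Ws)
  (x0 : M)
  (H : Type) (mul : H -> H -> H) (inv : H -> H) (e : H) (dH : H -> H -> R)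
  (Hgrp : is_group mul inv e) (HdH : is_metric dH) (Hcompl : complete dH)
  (Hbi : bi_invariant mul dH)
  (beta : Avec k l -> M -> H) (Hcoc : is_cocycle mul alpha beta)
  (Hhol : holder_in_x dM dH beta)
  (p : M -> M -> H) (Hp : is_p_beta mul inv dH Delta Ws beta p) :
  forall c : LPath k l M, InS Delta Ws x0 c -> Pfun mul e p x0 c = e.
Proof.
  pose proof Hgrp as [Ha [Hl [Hr [Hli Hri]]]].
  assert (Hpinv : forall r x y, In r Delta -> coarseW Ws r x y -> p y x = inv (p x y)).
  { intros r x y Hin Hc.
    assert (Hneg : exists a, evalH r a < 0).
    { destruct (HDelta r Hin) as [a Ha0].
      destruct (Rlt_dec (evalH r a) 0); [exists a; auto|].
      exists (negA a). rewrite evalH_neg. lra. }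
    destruct Hneg as [a Hna].
    pose proof (Hp r x y Hin Hc a Hna) as C1.
    pose proof (Hp r y x Hin (coarseW_sym _ _ _ _ _ _ HWs Hc) a Hna) as C2.
    eapply conv_unique; [exact HdH| exact C2|].
    assert (C3 : converges dH (fun n => inv (mul (inv (beta (nsmulA n a) x)) (beta (nsmulA n a) y))) (inv (p x y))).
    { intros eps He. destruct (C1 eps He) as [N HN]. exists N. intros n Hn.
      rewrite (inv_iso mul inv e dH Hgrp HdH Hbi). apply HN; auto. }
    eapply conv_ext; [|exact C3].
    intros n. simpl. rewrite (inv_mul mul inv e Hgrp), (inv_inv mul inv e Hgrp). reflexivity. }
  assert (Prev : forall c x, lyap_path Delta Ws x c ->
            Pfun mul e p (endpt x c) (revp x c) = inv (Pfun mul e p x c)).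
  { intro c; induction c as [|[r y] c' IH]; intros x Hpc; simpl in *.
    - symmetry. apply (inv_e mul inv e Hgrp).
    - destruct Hpc as [Hin [Hc Hpc]].
      rewrite (Pfun_app mul inv e p Hgrp), endpt_rev, IH by auto. simpl.
      rewrite Hr, (inv_mul mul inv e Hgrp), (Hpinv r x y) by auto. reflexivity. }
  (* telescoping *)
  assert (Tel : forall a c x, lyap_path Delta Ws x c ->
     (forall r y, In (r, y) c -> evalH r a < 0) ->
     converges dH (fun n => mul (inv (beta (nsmulA n a) x)) (beta (nsmulA n a) (endpt x c)))
       (Pfun mul e p x c)).
  { intros a c; induction c as [|[r y] c' IH]; intros x Hpc Hneg; simpl in *.
    - eapply conv_ext; [|apply conv_const; exact HdH]. intros n. simpl. symmetry. apply Hli.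
    - destruct Hpc as [Hin [Hc Hpc]].
      assert (C1 := Hp r x y Hin Hc a (Hneg r y (or_introl eq_refl))).
      assert (C2 := IH y Hpc (fun r0 y0 H0 => Hneg r0 y0 (or_intror H0))).
      eapply conv_ext; [|exact (mul_conv mul dH _ _ _ _ HdH Hbi C1 C2)].
      intros n. simpl. rewrite <- Ha, (Ha (beta (nsmulA n a) y)), Hri, Hl. reflexivity. }
  assert (CancP : forall u d v, lyap_cycle Delta Ws x0 u -> lyap_cycle Delta Ws x0 d ->
     Pfun mul e p x0 (u ++ d ++ revp x0 d ++ v) = Pfun mul e p x0 (u ++ v)).
  { intros u d v Cu Cd.
    rewrite !(Pfun_app mul inv e p Hgrp), ?endpt_app, (proj2 Cu).
    pose proof (Prev d x0 (proj1 Cd)) as Pr. rewrite (proj2 Cd) in Pr.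
    pose proof (endpt_rev d x0) as Er. rewrite (proj2 Cd) in Er.
    rewrite (proj2 Cd), Er, Pr, (Ha (Pfun mul e p x0 d)), Hri, Hl. reflexivity. }
  assert (Main : forall c, InS Delta Ws x0 c -> lyap_cycle Delta Ws x0 c /\ Pfun mul e p x0 c = e).
  { intros c HS; induction HS.
    - destruct H0 as [[Hpc Ec] [a Hneg]]. split; [split; auto|].
      pose proof (Tel a c x0 Hpc Hneg) as C. rewrite Ec in C.
      eapply conv_unique; [exact HdH|exact C|].
      eapply conv_ext; [|apply conv_const; exact HdH]. intros n. simpl. symmetry. apply Hli.
    - destruct IHHS1 as [Cc Pc], IHHS2 as [Cd Pd]. split; [apply cycle_app; auto|].
      rewrite (Pfun_app mul inv e p Hgrp), (proj2 Cc), Pc, Pd. apply Hl.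
    - destruct IHHS as [Cc Pc]. split; [eapply cycle_rev; eauto|].
      destruct Cc as [Hpc Ec]. pose proof (Prev c x0 Hpc) as Pr. rewrite Ec in Pr.
      rewrite Pr, Pc. apply (inv_e mul inv e Hgrp).
    - destruct IHHS as [Cc Pc]. split.
      + apply cycle_app; auto. apply cycle_app; auto. eapply cycle_rev; eauto.
      + destruct H0 as [Hpg Eg].
        rewrite (Pfun_app mul inv e p Hgrp), (Pfun_app mul inv e p Hgrp), Eg, (proj2 Cc), Pc, Hl.
        pose proof (Prev g x0 Hpg) as Pr. rewrite Eg in Pr. rewrite Pr. apply Hri.
    - destruct IHHS as [Cc Pc].
      destruct H0 as [u [d [v [Cu [Cd [Cv [E1 E2]]]]]]]. subst c c'.
      split; [apply cycle_app; auto|].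
      transitivity (Pfun mul e p x0 (u ++ d ++ revp x0 d ++ v)); [|exact Pc].
      symmetry. apply CancP; auto.
    - destruct IHHS as [Cc Pc].
      destruct H0 as [u [d [v [Cu [Cd [Cv [E1 E2]]]]]]]. subst c c'.
      split.
      + apply cycle_app; auto. apply cycle_app; auto. apply cycle_app; auto. eapply cycle_rev; eauto.
      + transitivity (Pfun mul e p x0 (u ++ v)); [|exact Pc]. apply CancP; auto. }
  intros c HS. apply Main, HS.
Qed.
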